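(* Let $M$ be a $\pi$-projective right $R$-module. Then $M$ is principally Goldie*-lifting if and only if every cyclic submodule $X$ of $M$ can be written as $X=D\oplus A$ where $D$ is a direct summand of $M$ and $A\ll M$.
   Context: $R$ is an associative ring with identity; modules are unital right $R$-modules. $M$ is $\pi$-projective if for all submodules $U,V$ with $U+V=M$ there exists $f\in\mathrm{End}(M)$ with $f(M)\subseteq U$ and $(1-f)(M)\subseteq V$. $K\ll M$ means $K$ is small in $M$. For submodules $X,Y$ of $M$, $X\,\beta^*\,Y$ means $(X+Y)/X\ll M/X$ and $(X+Y)/Y\ll M/Y$. $M$ is principally Goldie*-lifting if for every cyclic submodule $X$ there is a direct summand $D$ of $M$ with $X\,\beta^*\,D$. *)

(* Defs.v *)
(* A unital right R-module is modelled as a left module over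
   the converse ring R^c (R^c): the action  m·r  is written  r *: m. *)
From HB Require Import structures.
From mathcomp Require Import all_boot all_order all_algebra.
Set Implicit Arguments. Unset Strict Implicit. Unset Printing Implicit Defensive.
Import GRing.Theory.
Local Open Scope ring_scope.

Section ModuleNotions.
Variables (R : pzRingType) (M : lmodType R^c).

Definition subm := M -> Prop.
Definition sincl (U V : subm) := forall x, U x -> V x.
Definition seq_ (U V : subm) := forall x, U x <-> V x.
Definition stop : subm := fun _ => True.
Definition szero : subm := fun x => x = 0.
Definition ssum (U V : subm) : subm := fun x => exists u v, U u /\ V v /\ x = u + v.
Definition scap (U V : subm) : subm := fun x => U x /\ V x.

Definition is_submodule (U : subm) :=
  U 0 /\ (forall x y, U x -> U y -> U (x + y)) /\
  (forall (r : R) x, U x -> U ((r : R^c) *: x)).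

Definition cyclic_sub (X : subm) :=
  exists m : M, seq_ X (fun x => exists r : R, x = (r : R^c) *: m).

Definition small (K : subm) :=
  is_submodule K /\
  forall L, is_submodule L -> seq_ (ssum K L) stop -> seq_ L stop.

(* For submodules X <= K of M:  K/X << M/X, via the correspondence between
   submodules of M/X and submodules of M containing X. *)
Definition small_mod (X K : subm) :=
  forall L, is_submodule L -> sincl X L -> seq_ (ssum K L) stop -> seq_ L stop.

Definition beta_star (X Y : subm) :=
  small_mod X (ssum X Y) /\ small_mod Y (ssum X Y).

Definition direct_summand (D : subm) :=
  is_submodule D /\ exists D', is_submodule D' /\
    seq_ (ssum D D') stop /\ seq_ (scap D D') szero.

Definition pi_projective :=
  forall U V, is_submodule U -> is_submodule V -> seq_ (ssum U V) stop ->
  exists f : {linear M -> M}, (forall m, U (f m)) /\ (forall m, V (m - f m)).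

Definition principally_goldie_star_lifting :=
  forall X, cyclic_sub X -> exists D, direct_summand D /\ beta_star X D.

End ModuleNotions.

(* Main.v *)
Require Import Defs.
From HB Require Import structures.
From mathcomp Require Import all_boot all_order all_algebra.
Import GRing.Theory.
Local Open Scope ring_scope.
Set Implicit Arguments. Unset Strict Implicit.

Section H.
Context {R : pzRingType} {M : lmodType R^c}.
Implicit Types U V X L : subm M.

Lemma sub0 U : is_submodule U -> U 0.
Proof. by case. Qed.
Lemma subD U x y : is_submodule U -> U x -> U y -> U (x+y).
Proof. by case=> _ [h _]; apply: h. Qed.
Lemma subN U x : is_submodule U -> U x -> U (-x).
Proof. case=> _ [_ h] Ux. rewrite -scaleN1r. exact: (h (-1) x Ux). Qed.
Lemma subB U x y : is_submodule U -> U x -> U y -> U (x-y).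
Proof. by move=> hU hx hy; apply: subD=> //; apply: subN. Qed.
Lemma ssum_sub U V : is_submodule U -> is_submodule V -> is_submodule (ssum U V).
Proof.
move=> hU hV; split; first by exists 0, 0; rewrite addr0; split=> //; [exact: sub0|split=>//; exact: sub0].
split.
  move=> x y [u [v [Uu [Vv ->]]]] [u' [v' [Uu' [Vv' ->]]]].
  exists (u+u'), (v+v'); split; first exact: subD.
  split; first exact: subD. by rewrite addrACA.
move=> r x [u [v [Uu [Vv ->]]]]; exists ((r : R^c) *: u), ((r : R^c) *: v).
split; first by case: hU => _ [_ h]; apply: h.
split; first by case: hV => _ [_ h]; apply: h.
by rewrite scalerDr.
Qed.
Lemma scap_sub U V : is_submodule U -> is_submodule V -> is_submodule (scap U V).
Proof.
move=> hU hV; split; first by split; exact: sub0.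
split; first by move=> x y [? ?] [? ?]; split; exact: subD.
move=> r x [? ?]; split; [by case: hU => _ [_ h]; apply: h|by case: hV => _ [_ h]; apply: h].
Qed.
Lemma cyc_sub X : cyclic_sub X -> is_submodule X.
Proof.
case=> m hX; split; first by apply/hX; exists 0; rewrite scale0r.
split.
  move=> x y /hX [r ->] /hX [s ->]; apply/hX; exists (r + s); by rewrite scalerDl.
move=> r x /hX [s ->]; apply/hX; exists ((r : R^c) * s); by rewrite scalerA.
Qed.
Lemma sumP U V x : ssum U V x -> exists u v, U u /\ V v /\ x = u + v.
Proof. by []. Qed.
End H.

Theorem proposition3p17 (R : pzRingType) (M : lmodType R^c) :
  pi_projective M ->
  (principally_goldie_star_lifting M <->
   forall X : subm M, cyclic_sub X ->
     exists D A : subm M, direct_summand D /\ small A /\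
       seq_ X (ssum D A) /\ seq_ (scap D A) (@szero R M)).
Proof.
move=> hpi; split.
- move=> H X cX; have sX := cyc_sub cX.
  case: (H X cX) => D [[sD [D' [sD' [DD' capDD']]]] [bX bD]].
  have XD' : seq_ (ssum X D') (@stop R M).
    apply: bX; [exact: ssum_sub | | ].
      by move=> x Xx; exists x, 0; rewrite addr0; repeat split=>//; exact: sub0.
    move=> m; split=> // _; have [d [d' [Dd [D'd' ->]]]] := sumP (proj2 (DD' m) I).
    exists (0 + d), (0 + d'); split; first by exists 0, d; repeat split=>//; exact: sub0.
    split; last by rewrite !add0r.
    by exists 0, d'; repeat split=>//; exact: sub0.
  have [f [fX fD']] := hpi X D' sX sD' XD'.
  have inter : forall d, D d -> D' (f d) -> f d = 0.
    move=> d Dd D'fd.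
    have D'd : D' d by rewrite -(subrK (f d) d); apply: subD.
    have: d = 0 by apply/capDD'.
    by move=> ->; rewrite linear0.
  exists (fun y => exists d, D d /\ y = f d), (scap X D').
  have sDpp : is_submodule (fun y => exists d, D d /\ y = f d).
    split; first by exists 0; rewrite linear0; split=>//; exact: sub0.
    split.
      move=> x y [d [Dd ->]] [e [De ->]]; exists (d + e); rewrite linearD; split=>//; exact: subD.
    move=> r x [d [Dd ->]]; exists ((r : R^c) *: d); rewrite linearZ; split=>//.
    by case: sD => _ [_ h]; apply: h.
  split.
    split=> //; exists D'; split=> //; split.
      move=> m; split=> // _; have [d [d' [Dd [D'd' ->]]]] := sumP (proj2 (DD' m) I).
      exists (f d), (d + d' - f d); split; first by exists d.
      split; last by rewrite addrCA subrr addr0.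
      by rewrite addrAC; apply: subD.
    move=> y; split.
      by case=> [[d [Dd ->]] D'y]; apply: inter.
    move=> ->; split; [by exists 0; rewrite linear0; split=>//; exact: sub0|exact: sub0].
  split.
    split; first exact: scap_sub.
    move=> L sL AL.
    pose L' := ssum D (scap L D').
    have sL' : is_submodule L' by apply: ssum_sub => //; exact: scap_sub.
    have L'top : seq_ L' (@stop R M).
      apply: bD=> //.
        by move=> d Dd; exists d, 0; rewrite addr0; repeat split=>//; exact: sub0.
      move=> m; split=> // _; have [d [d' [Dd [D'd' ->]]]] := sumP (proj2 (DD' m) I).
      have [a [l [[Xa D'a] [Ll ed']]]] := sumP (proj2 (AL d') I).
      have D'l : D' l by rewrite -(addKr a l) -ed'; apply: subD => //; apply: subN.
      exists (a + d), (0 + l); split; first by exists a, d.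
      split; first by exists 0, l; split; [exact: sub0|split=>//].
      by rewrite add0r ed' addrCA addrA.
    move=> m; split=> // _; have [a [l [[Xa D'a] [Ll ->]]]] := sumP (proj2 (AL m) I).
    have [d0 [l0 [Dd0 [[Ll0 D'l0] ea]]]] := sumP (proj2 (L'top a) I).
    have D'd0 : D' d0 by rewrite -(addrK l0 d0) -ea; apply: subB.
    have d00 : d0 = 0 by apply/capDD'.
    by move: ea; rewrite d00 add0r => ->; apply: subD.
  split.
    move=> x; split.
      move=> Xx; have [d [d' [Dd [D'd' ex]]]] := sumP (proj2 (DD' x) I).
      exists (f d), (x - f d); split; first by exists d.
      split; last by rewrite addrC subrK.
      split; first by apply: subB.
      by rewrite ex addrAC; apply: subD.
    by case=> [y [a [[d [Dd ->]] [[Xa _] ->]]]]; apply: subD.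
  move=> y; split.
    by case=> [[d [Dd ->]] [_ D'y]]; apply: inter.
  move=> ->; split; first by exists 0; rewrite linear0; split=>//; exact: sub0.
  by split; exact: sub0.
- move=> H X cX; have sX := cyc_sub cX.
  have [D [A [sumD [[sA smA] [XDA capDA]]]]] := H X cX.
  have sD := proj1 sumD.
  have DX : forall d, D d -> X d.
    by move=> d Dd; apply/XDA; exists d, 0; rewrite addr0; repeat split=>//; exact: sub0.
  exists D; split=> //; split.
    move=> L sL XL top; move=> m; split=> // _.
    have [u [l [[x [d [Xx [Dd ->]]]] [Ll ->]]]] := sumP (proj2 (top m) I).
    exact: (subD sL (subD sL (XL _ Xx) (XL _ (DX _ Dd))) Ll).
  move=> L sL DL top; apply: smA=> // m; split=> // _.
  have [u [l [[x [d [Xx [Dd ->]]]] [Ll ->]]]] := sumP (proj2 (top m) I).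
  have [d' [a [Dd' [Aa ->]]]] := sumP (proj1 (XDA x) Xx).
  exists a, (d' + d + l); split=> //; split; last by rewrite (addrC d' a) -!addrA.
  exact: (subD sL (subD sL (DL _ Dd') (DL _ Dd)) Ll).
Qed.
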